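(* Let $\kappa$ be an infinitesimal character of the gap-insertion Hopf algebra $\mathbf{H}$ of noncrossing partitions, and let $K$ be the character of the block-substitution bialgebra $\mathbf{B}$ with $K(P)=\kappa(P)$ for every nonempty noncrossing partition $P$. Let $e$ be the infinitesimal character of $\mathbf{H}$ with $e(P)=1$ if $P$ is a noncrossing partition with exactly one block and $e(P)=0$ for all other noncrossing partitions. Then $$\kappa=e\curvearrowleft K,$$ where $(\alpha\curvearrowleft\phi):=(\alpha\otimes\phi)\circ\rho$ for a linear form $\alpha$ on $\mathbf{H}$ and a character $\phi$ of $\mathbf{B}$.
   Context: Noncrossing partitions of $[n]$: no $a<c<b<d$ with $a,b$ in one block and $c,d$ in another; partitions of linearly ordered finite sets are identified with partitions of $[m]$ via the order-preserving bijection; $P_{|X}$ is the induced partition. $\mathbf{H}$ is the free associative unital algebra on nonempty noncrossing partitions (its Hopf structure is the gap-insertion coproduct; only its algebra structure and counit matter here: the counit $\varepsilon$ is $1$ on $\mathbf 1$ and $0$ on nonempty monomials). An infinitesimal character of $\mathbf{H}$ is a linear form $f$ with $f(xy)=f(x)\varepsilon(y)+\varepsilon(x)f(y)$, i.e. vanishing on $\mathbf 1$ and on products of two nonempty monomials. $\mathbf{B}$ is the free commutative unital algebra on nonempty noncrossing partitions; a character of $\mathbf B$ is a unital algebra homomorphism to $\mathbb K$. For noncrossing $P\leq Q$ (refinement) with $Q=\{\tau_1,\dots,\tau_l\}$, $P/Q=P_{|\tau_1}\cdots P_{|\tau_l}\in\mathbf{B}$. The coaction $\rho:\mathbf{H}\to\mathbf{H}\otimes\mathbf{B}$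 is the algebra morphism with $\rho(P)=\sum_{Q\geq P\text{ noncrossing}}Q\otimes P/Q$. *)

(* Defs.v *)
From HB Require Import structures.
From mathcomp Require Import all_boot all_order all_algebra.
Set Implicit Arguments. Unset Strict Implicit. Unset Printing Implicit Defensive.
Import GRing.Theory.
Local Open Scope ring_scope.

(* A (candidate) set partition of [n] = 'I_n, given by its set of blocks.
   Finsets are extensional, so each partition has a unique representative. *)
Record ncp := NCP { ncp_n : nat; ncp_bl : {set {set 'I_ncp_n}} }.

Definition noncrossing n (P : {set {set 'I_n}}) : bool :=
  [forall B in P, forall C in P, (B != C) ==>
     [forall a in B, forall b in B, forall c in C, forall d in C,
        ~~ ((a < c)%N && (c < b)%N && (b < d)%N)]].

Definition nc_partition n (P : {set {set 'I_n}}) : bool :=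
  partition P [set: 'I_n] && noncrossing P.

(* nonempty noncrossing partition: a generator of H and of B *)
Definition ncp_ok (p : ncp) : bool := (0 < ncp_n p)%N && nc_partition (ncp_bl p).

(* words of generators = basis monomials of H *)
Definition word_ok (w : seq ncp) : bool := all ncp_ok w.

Definition refines n (P Q : {set {set 'I_n}}) : bool :=
  [forall B in P, exists C in Q, B \subset C].

Definition rk n (X : {set 'I_n}) (x : 'I_n) : nat := #|[set y in X | (y < x)%N]|.

(* induced partition P_{|X}, transported to [#|X|] *)
Definition restr n (P : {set {set 'I_n}}) (X : {set 'I_n}) : ncp :=
  @NCP #|X| [set [set j : 'I_#|X| | [exists x in B :&: X, rk X x == val j]]
            | B in [set B in P | B :&: X != set0]].

(* P/Q = P_{|tau_1} ... P_{|tau_l}, a monomial of B (listed as a sequence;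
   B is commutative, so the order is immaterial) *)
Definition quot n (P Q : {set {set 'I_n}}) : seq ncp :=
  [seq restr P tau | tau <- enum Q].

(* rho(P) = sum_{Q >= P noncrossing} Q (x) P/Q, as a list of basis tensors *)
Definition rho1 (p : ncp) : seq (seq ncp * seq ncp) :=
  [seq ([:: @NCP (ncp_n p) Q], quot (ncp_bl p) Q)
  | Q <- enum [set Q : {set {set 'I_(ncp_n p)}} | nc_partition Q && refines (ncp_bl p) Q]].

(* rho extended as an algebra morphism to words: rho(p w) = rho(p) rho(w),
   product in H (x) B being concatenation (x) monomial product *)
Fixpoint rho (w : seq ncp) : seq (seq ncp * seq ncp) :=
  match w with
  | [::] => [:: ([::], [::])]
  | p :: w' => [seq (q.1 ++ t.1, q.2 ++ t.2) | q <- rho1 p, t <- rho w']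
  end.

Definition epsH (R : nzRingType) (w : seq ncp) : R := if w is [::] then 1 else 0.

(* infinitesimal character of H (linear form given on basis monomials) *)
Definition infinitesimal (R : nzRingType) (f : seq ncp -> R) : Prop :=
  forall x y, word_ok x -> word_ok y ->
    f (x ++ y) = f x * epsH R y + epsH R x * f y.

Definition Bchar (R : comRingType) (k : ncp -> R) (m : seq ncp) : R :=
  \prod_(x <- m) k x.

(* alpha <- phi := (alpha (x) phi) o rho, on basis monomials of H *)
Definition coact (R : nzRingType) (alpha : seq ncp -> R) (phi : seq ncp -> R)
  (w : seq ncp) : R :=
  \sum_(t <- rho w) alpha t.1 * phi t.2.

Definition eH (R : nzRingType) (w : seq ncp) : R :=
  match w with [:: p] => if #|ncp_bl p| == 1%N then 1 else 0 | _ => 0 end.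

(* Main.v *)
Require Import Defs.
From mathcomp Require Import all_boot all_order all_algebra.
Set Implicit Arguments. Unset Strict Implicit. Unset Printing Implicit Defensive.
Import GRing.Theory.
Local Open Scope ring_scope.

Lemma rk_setT n (x : 'I_n) : rk [set: 'I_n] x = x.
Proof.
rewrite /rk.
have le : (x <= n)%N by apply: ltnW.
have -> : [set y in [set: 'I_n] | (y < x)%N] = [set widen_ord le i | i in 'I_x].
  apply/setP => y; rewrite !inE; apply/idP/imsetP.
  - move=> yx; exists (Ordinal yx) => //; exact: val_inj.
  - by case=> i _ ->; rewrite /= ltn_ord.
rewrite card_imset ?card_ord //; by move=> a b /(congr1 val) /= /val_inj.
Qed.

Lemma restr_setT (p : ncp) : ncp_ok p ->
  restr (ncp_bl p) [set: 'I_(ncp_n p)] = p.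
Proof.
case: p => n P /= /andP[_ /andP[Hp _]].
rewrite /restr.
have : forall m (e : m = n), @NCP m [set [set j : 'I_m | [exists x in B :&: [set: 'I_n], rk [set: 'I_n] x == val j]]
            | B in [set B in P | B :&: [set: 'I_n] != set0]] = NCP P.
  move=> m e; subst m; congr NCP.
  have E : forall B : {set 'I_n}, [set j : 'I_n | [exists x in B :&: [set: 'I_n], rk [set: 'I_n] x == val j]] = B.
    move=> B; apply/setP => j; rewrite inE setIT; apply/existsP/idP.
    - by case=> x /andP[xB]; rewrite rk_setT => /eqP/val_inj <-.
    - by move=> jB; exists j; rewrite jB rk_setT eqxx.
  apply/setP => B; apply/imsetP/idP.
  - by case=> C; rewrite inE => /andP[CP _] ->; rewrite E.
  - move=> BP; exists B; last by rewrite E.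
    rewrite inE BP setIT /=; apply/negP => /eqP B0.
    by move: Hp => /and3P[_ _ /negP]; apply; rewrite -B0.
by apply; rewrite cardsT card_ord.
Qed.

Lemma sum_all0 (R : nzRingType) (T : Type) (P : pred T) (F : T -> R) (s : seq T) :
  all P s -> (forall t, P t -> F t = 0) -> \sum_(t <- s) F t = 0.
Proof.
move=> + H; elim: s => [|x s IH]; first by rewrite big_nil.
by rewrite /= big_cons => /andP[/H -> /IH ->]; rewrite add0r.
Qed.

Lemma rho1_size p : all (fun q => size q.1 == 1%N) (rho1 p).
Proof. by rewrite /rho1; elim: (enum _). Qed.

Lemma rho_size w : all (fun t => size t.1 == size w) (rho w).
Proof.
elim: w => [|p w IH] //=.
elim: (rho1 p) (rho1_size p) => [|q s IHs] //= /andP[/eqP q1 /IHs].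
rewrite all_cat => ->; rewrite andbT all_map.
apply: sub_all IH => t /= /eqP.
by rewrite size_cat q1 => ->.
Qed.

Lemma rho_single p : rho [:: p] = [seq (q.1 ++ [::], q.2 ++ [::]) | q <- rho1 p].
Proof. by rewrite /=; elim: (rho1 p) => //= q s ->. Qed.

Theorem mainTheorem10 (R : fieldType) (kappa : seq ncp -> R) (K : ncp -> R) :
  infinitesimal kappa ->
  (forall p, ncp_ok p -> K p = kappa [:: p]) ->
  forall w, word_ok w -> kappa w = coact (@eH R) (Bchar K) w.
Proof.
move=> Hinf HK [|p [|q w]] Hw.
- have := Hinf [::] [::] is_true_true is_true_true.
  rewrite /= /epsH mulr1 mul1r => /eqP; rewrite -[X in X == _]addr0 => /eqP /addrI <-.
  by rewrite /coact /= big_cons big_nil /eH mul0r addr0.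
- move: Hw => /= /andP[Hp _].
  rewrite -HK // /coact rho_single big_map /rho1 big_map big_enum /=.
  have Q0in : [set [set: 'I_(ncp_n p)]] \in [set Q : {set {set 'I_(ncp_n p)}} | nc_partition Q && refines (ncp_bl p) Q].
    move: (Hp) => /andP[n0 _].
    rewrite inE /nc_partition /partition cover1 eqxx trivIset1 /=.
    apply/andP; split; [apply/andP; split|].
    - rewrite in_set1 eq_sym; apply/set0Pn; by exists (Ordinal n0).
    - apply/forallP => B; apply/implyP; rewrite in_set1 => /eqP ->.
      apply/forallP => C; apply/implyP; rewrite in_set1 => /eqP ->.
      by rewrite eqxx.
    - apply/forallP => B; apply/implyP => _; apply/existsP; exists setT.
      by rewrite in_set1 eqxx subsetT.
  rewrite (bigD1 _ Q0in) big1 ?addr0.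
    rewrite /= addr0 /eH cards1 eqxx mul1r cats0 /quot enum_set1 /Bchar big_seq1 restr_setT //.
  move=> Q /andP[QS QQ0]; have : Q \in [set Q0 : {set {set 'I_(ncp_n p)}} | nc_partition Q0 && refines (ncp_bl p) Q0] := QS; rewrite inE => /andP[/andP[HQ _] _].
  rewrite /eH; case: ifP => [/cards1P[B EB]|]; last by rewrite mul0r.
  move: HQ QQ0; rewrite EB => /and3P[/eqP + _ _]; rewrite cover1 => ->.
  by rewrite eqxx.
- have := Hinf [:: p] (q :: w).
  move: Hw => /= /andP[Hp Hw].
  rewrite /= /epsH Hp Hw => /(_ isT isT) ->; rewrite mulr0 mul0r addr0.
  rewrite /coact; symmetry.  apply: sum_all0 (rho_size _) _.
  move=> [l m]; case: l => [|a [|b s]] //= _; by rewrite mul0r.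
Qed.
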